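(* Let $\mathcal{H}_A$ and $\mathcal{H}_B$ be $d$-dimensional Hilbert spaces. Let $\{\ket{k}\}_{k=1}^d$ be an orthonormal basis of each space, and fix a unit vector $\ket{b}\in\mathcal{H}_B$. Let $U$ be a unitary on $\mathcal{H}_A\otimes\mathcal{H}_B$ with $U(\ket{k}\otimes\ket{b})=\ket{k}\otimes\ket{k}$ for all $k$. Then $(U,\ket{b})$ masks the family of states $$\ket{a_\phi}=\tfrac{1}{\sqrt d}\sum_{k=1}^d e^{i\phi_k}\ket{k},\qquad \phi=(\phi_1,\dots,\phi_d)\in[-\pi,\pi]^d.$$ That is, for every such $\ket{a_\phi}$, both marginals of $U(\ket{a_\phi}\otimes\ket{b})$ equal the same state $I/d$, independent of $\phi$. More generally, for every density operator $\sigma$ on $\mathcal{H}_A$ that is a convex combination of the projectors $\ket{a_\phi}\bra{a_\phi}$, both marginals of $U(\sigma\otimes\ket{b}\bra{b})U^\dagger$ equal $I/d$.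
   Context: A masker for a set of states on $\mathcal{H}_A$ is a unitary $U$ on $\mathcal{H}_A\otimes\mathcal{H}_B$ together with a fixed ancilla state $\ket{b}\in\mathcal{H}_B$. It masks the set if, for every state in the set, the reduced states on $A$ and on $B$ of the output $U(\cdot\otimes\ket{b})$ do not depend on which state of the set was input. The convex hull of the states $\ket{a_\phi}$ is called the great hyper-disk. A unitary with the stated action exists, since the vectors $\ket{k}\otimes\ket{k}$ are orthonormal. *)

(* Defs.v *)
From HB Require Import structures.
From mathcomp Require Import all_boot all_order all_algebra.
From mathcomp Require Import complex mxtens.
From mathcomp Require Import reals trigo.
Set Implicit Arguments.
Unset Strict Implicit.
Unset Printing Implicit Defensive.
Import Order.TTheory GRing.Theory Num.Theory.
Local Open Scope ring_scope.
Local Open Scope complex_scope.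

Section Defs.
Variable R : realType.
Local Notation C := (R[i]).

Definition expi (x : R) : C := (cos x)%:C + 'i * (sin x)%:C.

(* conjugate transpose (ket -> bra, U -> U^dagger) *)
Definition adj {m n} (M : 'M[C]_(m, n)) : 'M[C]_(n, m) := map_mx conjc (M^T).

Definition ket {d} (k : 'I_d) : 'cV[C]_d := delta_mx k 0.

Definition a_phi {d} (phi : 'I_d -> R) : 'cV[C]_d :=
  ((Num.sqrt (d%:R : R))^-1)%:C *: \sum_(k < d) expi (phi k) *: ket k.

Definition phase_ok {d} (phi : 'I_d -> R) : Prop :=
  forall k, - pi <= phi k <= pi.

Definition in_hyperdisk {d} (sigma : 'M[C]_d) : Prop :=
  exists (n : nat) (w : 'I_n -> R) (ph : 'I_n -> 'I_d -> R),
    (forall j, 0 <= w j) /\ \sum_(j < n) w j = 1 /\ (forall j, phase_ok (ph j)) /\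
    sigma = \sum_(j < n) (w j)%:C *: (a_phi (ph j) *m adj (a_phi (ph j))).

(* partial traces on H_A (x) H_B = C^d (x) C^d, index convention of tensmx *)
Definition ptraceB {d} (rho : 'M[C]_(d * d)) : 'M[C]_d :=
  \matrix_(i, j) \sum_(k < d) rho (mxtens_index (i, k)) (mxtens_index (j, k)).
Definition ptraceA {d} (rho : 'M[C]_(d * d)) : 'M[C]_d :=
  \matrix_(i, j) \sum_(k < d) rho (mxtens_index (k, i)) (mxtens_index (k, j)).

Definition maxmixed (d : nat) : 'M[C]_d := ((d%:R : C)^-1) *: 1%:M.
End Defs.
Arguments expi {R}.
Arguments adj {R m n}.
Arguments ket {R d}.
Arguments a_phi {R d}.
Arguments phase_ok {R d}.
Arguments in_hyperdisk {R d}.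
Arguments ptraceA {R d}.
Arguments ptraceB {R d}.

(* Main.v *)
Require Import Defs.
From HB Require Import structures.
From mathcomp Require Import all_boot all_order all_algebra.
From mathcomp Require Import complex mxtens spectral.
From mathcomp Require Import reals trigo.
Import Order.TTheory GRing.Theory Num.Theory.
Local Open Scope ring_scope.
Local Open Scope complex_scope.

Section S.
Variable R : realType.
Local Notation C := (R[i]).

Lemma expiJ (x : R) : expi x * (expi x)^* = 1.
Proof.
rewrite /expi; apply/eqP; rewrite eq_complex /=.
rewrite !(mul0r, mulr0, mul1r, subr0, add0r, addr0, mulrN, mulNr, opprK, oppr0) /=.
apply/andP; split; apply/eqP.
  by rewrite -(cos2Dsin2 x) !expr2.
by rewrite mulrC addrC subrr.
Qed.

Lemma adj_mul m n p (A : 'M[C]_(m, n)) (B : 'M[C]_(n, p)) :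
  adj (A *m B) = adj B *m adj A.
Proof.
apply/matrixP=> i j; rewrite !mxE rmorph_sum; apply: eq_bigr => k _.
by rewrite !mxE rmorphM mulrC.
Qed.

Lemma adj_tens m n p q (A : 'M[C]_(m, n)) (B : 'M[C]_(p, q)) :
  adj (A *t B) = adj A *t adj B.
Proof. by apply/matrixP=> i j; rewrite !mxE rmorphM. Qed.

Lemma tens_suml I (r : seq I) P m n p q (F : I -> 'M[C]_(m, n)) (B : 'M[C]_(p, q)) :
  (\sum_(k <- r | P k) F k) *t B = \sum_(k <- r | P k) (F k *t B).
Proof.
apply/matrixP=> i j; rewrite !mxE !summxE mulr_suml; apply: eq_bigr => k _.
by rewrite !mxE.
Qed.

Lemma tens_scalel m n p q (c : C) (A : 'M[C]_(m, n)) (B : 'M[C]_(p, q)) :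
  (c *: A) *t B = c *: (A *t B).
Proof. by apply/matrixP=> i j; rewrite !mxE mulrA. Qed.

Lemma ptraceA_sum d I (r : seq I) P (F : I -> 'M[C]_(d * d)) :
  ptraceA (\sum_(k <- r | P k) F k) = \sum_(k <- r | P k) ptraceA (F k).
Proof.
apply/matrixP=> i j; rewrite !mxE summxE.
under eq_bigr do rewrite summxE.
rewrite exchange_big; apply: eq_bigr => k _; by rewrite mxE.
Qed.

Lemma ptraceB_sum d I (r : seq I) P (F : I -> 'M[C]_(d * d)) :
  ptraceB (\sum_(k <- r | P k) F k) = \sum_(k <- r | P k) ptraceB (F k).
Proof.
apply/matrixP=> i j; rewrite !mxE summxE.
under eq_bigr do rewrite summxE.
rewrite exchange_big; apply: eq_bigr => k _; by rewrite mxE.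
Qed.

Lemma ptraceA_scale d (c : C) (M : 'M[C]_(d * d)) : ptraceA (c *: M) = c *: ptraceA M.
Proof. apply/matrixP=> i j; rewrite !mxE mulr_sumr; apply: eq_bigr => k _; by rewrite mxE. Qed.
Lemma ptraceB_scale d (c : C) (M : 'M[C]_(d * d)) : ptraceB (c *: M) = c *: ptraceB M.
Proof. apply/matrixP=> i j; rewrite !mxE mulr_sumr; apply: eq_bigr => k _; by rewrite mxE. Qed.


Lemma eq_ord1 (x : 'I_1) : (x == 0) = true.
Proof. by rewrite (ord1 x). Qed.

Lemma conj_realM (r : R) (z : C) : (r%:C * z)^* = r%:C * z^*.
Proof.
case: z => a b; apply/eqP; rewrite eq_complex /=.
by rewrite !mul0r !subr0 !addr0 mulrN !eqxx.
Qed.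

Lemma ketE d (k i : 'I_d) (j : 'I_1) : ket k i j = (i == k)%:R :> C.
Proof. by rewrite /ket mxE (ord1 j) eqxx andbT. Qed.

Lemma keyL d (v : 'M[C]_(d * d, 1)) (c : 'I_d -> C) :
  (forall m i, v (mxtens_index (m, i)) 0 = c m * (m == i)%:R) ->
  (forall m, c m * (c m)^* = (d%:R)^-1) ->
  ptraceA (v *m adj v) = maxmixed R d /\ ptraceB (v *m adj v) = maxmixed R d.
Proof.
move=> hv hc; split; apply/matrixP=> i j; rewrite !mxE.
- under eq_bigr do rewrite !mxE big_ord1 !mxE !hv.
  rewrite (bigD1 i) //= big1 ?addr0; last first.
    by move=> k /negbTE ->; rewrite !mulr0 mul0r.
  rewrite eqxx mulr1; case: eqVneq => [->|_] /=.
    by rewrite !mulr1 hc.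
  by rewrite !mulr0 conjc0 !mulr0.
- under eq_bigr do rewrite !mxE big_ord1 !mxE !hv.
  rewrite (bigD1 i) //= big1 ?addr0; last first.
    move=> k ki; rewrite [i == k]eq_sym (negbTE ki) mulr0 mul0r //.
  rewrite eqxx mulr1.
  case: eqVneq => [->|ij] /=.
    by rewrite !mulr1 hc.
  by rewrite !mulr0 conjc0 !mulr0.
Qed.

Lemma part1 d (b : 'cV[C]_d) (U : 'M[C]_(d * d)) :
  (forall k : 'I_d, U *m (ket k *t b) = ket k *t ket k) ->
  forall phi : 'I_d -> R,
     let out := U *m (a_phi phi *t b) in
     ptraceA (out *m adj out) = maxmixed R d /\
     ptraceB (out *m adj out) = maxmixed R d.
Proof.
move=> hU phi out.
set s : C := ((Num.sqrt (d%:R : R))^-1)%:C.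
apply: (@keyL d out (fun m => s * expi (phi m))).
- move=> m i; rewrite /out /a_phi tens_scalel tens_suml.
  under eq_bigr do rewrite tens_scalel.
  rewrite -scalemxAr mulmx_sumr.
  under eq_bigr do rewrite -scalemxAr hU.
  rewrite mxE summxE.
  under eq_bigr do rewrite !mxE mxtens_indexK /= !eq_ord1 !andbT.
  rewrite (bigD1 m) //= big1 ?addr0; last first.
    by move=> k km; rewrite eq_sym (negbTE km) mul0r mulr0.
  rewrite !eqxx mul1r mulrA [i == m]eq_sym //.
- move=> m; rewrite /s rmorphM mulrACA expiJ mulr1.
  set t := (_^-1 : R).
  rewrite [X in _ * X = _](_ : _ = t%:C); last by apply/eqP; rewrite eq_complex /= oppr0 !eqxx.
  rewrite -rmorphM -invfM -expr2 sqr_sqrtr ?ler0n //.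
  by rewrite fmorphV rmorph_nat.
Qed.


End S.

Theorem theorem4 (R : realType) (d : nat) (b : 'cV[R[i]]_d) (U : 'M[R[i]]_(d * d)) :
  adj b *m b = 1%:M ->
  U \is unitarymx ->
  (forall k : 'I_d, U *m (ket k *t b) = ket k *t ket k) ->
  (forall phi : 'I_d -> R, phase_ok phi ->
     let out := U *m (a_phi phi *t b) in
     ptraceA (out *m adj out) = maxmixed R d /\
     ptraceB (out *m adj out) = maxmixed R d) /\
  (forall sigma : 'M[R[i]]_d, in_hyperdisk sigma ->
     let out := U *m (sigma *t (b *m adj b)) *m adj U in
     ptraceA out = maxmixed R d /\ ptraceB out = maxmixed R d).
Proof.
move=> _ _ hU; split; first by move=> phi _; exact: part1.
move=> sigma [n [w [ph [_ [hw [_ ->]]]]]] out.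
have E : out = \sum_(j < n) (w j)%:C *:
   ((U *m (a_phi (ph j) *t b)) *m adj (U *m (a_phi (ph j) *t b))).
  rewrite /out tens_suml mulmx_sumr mulmx_suml; apply: eq_bigr => j _.
  rewrite tens_scalel -scalemxAr -scalemxAl; congr (_ *: _).
  by rewrite -tensmx_mul -adj_tens adj_mul !mulmxA.
have hw' : \sum_(j < n) (w j)%:C = 1 :> R[i] by rewrite -rmorph_sum hw.
rewrite E ptraceA_sum ptraceB_sum; split.
- under eq_bigr do rewrite ptraceA_scale (proj1 (@part1 R d b U hU _)).
  by rewrite -scaler_suml hw' scale1r.
- under eq_bigr do rewrite ptraceB_scale (proj2 (@part1 R d b U hU _)).
  by rewrite -scaler_suml hw' scale1r.
Qed.
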